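(* Let $\mathbb{C}$ be a regular majority category. Then for any three reflexive relations $A,B,C$ on any object $X$ of $\mathbb{C}$, $(A\circ B)\cap(A\circ C)\leqslant A\circ(B\cap C)$.
   Context: A category is regular if it has finite limits and coequalizers of kernel pairs and regular epimorphisms are pullback-stable; morphisms factor as regular epi followed by mono. Relations on $X$ are subobjects of $X\times X$, reflexive if the diagonal factors through them; $\cap$ is intersection (pullback) of subobjects, $\leqslant$ the order on subobjects. For $w:S\to W$ and a subobject $A$ of $W$, $w\in_S A$ means $w$ factors through a representative of $A$. The composite $R\circ S$ of relations represented by $(r_1,r_2):R_0\to X\times Y$ and $(s_1,s_2):S_0\to Y\times Z$ is the image of $(r_1p_1,s_2p_2):P\to X\times Z$, $(P,p_1,p_2)$ the pullback of $s_1$ along $r_2$. A ternary relation $R\leqslant X\times Y\times Z$ is majority-selecting if for all $S$ and $x,x':S\to X$, $y,y':S\to Y$, $z,z':S\to Z$: $(x,y,z')\in_S R$, $(x,y',z)\in_S R$, $(x',y,z)\in_S R$ imply $(x,y,z)\in_S R$. A category with products is a majority category if all its ternary relations are majority-selecting. *)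

(* Defs.v *)
Set Implicit Arguments.
Unset Strict Implicit.

Record Category := {
  Ob :> Type;
  Hom : Ob -> Ob -> Type;
  idm : forall X, Hom X X;
  comp : forall X Y Z, Hom Y Z -> Hom X Y -> Hom X Z;
  comp_assoc : forall X Y Z W (h : Hom Z W) (g : Hom Y Z) (f : Hom X Y),
      comp h (comp g f) = comp (comp h g) f;
  comp_id_l : forall X Y (f : Hom X Y), comp (idm Y) f = f;
  comp_id_r : forall X Y (f : Hom X Y), comp f (idm X) = f
}.

Arguments Hom {c} X Y.
Arguments idm {c} X.
Arguments comp {c X Y Z} _ _.
Notation "g \o f" := (comp g f) (at level 40, left associativity).

Section Notions.
Variable C : Category.

Definition mono {A B : C} (m : Hom A B) : Prop :=
  forall Z (g h : Hom Z A), m \o g = m \o h -> g = h.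

Definition is_terminal (T : C) : Prop :=
  forall Z : C, exists f : Hom Z T, forall g : Hom Z T, g = f.

Definition is_pullback {A B Z P : C} (f : Hom A Z) (g : Hom B Z)
    (p1 : Hom P A) (p2 : Hom P B) : Prop :=
  f \o p1 = g \o p2 /\
  forall W (u : Hom W A) (v : Hom W B), f \o u = g \o v ->
    exists h : Hom W P, (p1 \o h = u /\ p2 \o h = v) /\
      forall h' : Hom W P, p1 \o h' = u -> p2 \o h' = v -> h' = h.

Definition is_coequalizer {A B Q : C} (f g : Hom A B) (q : Hom B Q) : Prop :=
  q \o f = q \o g /\
  forall W (u : Hom B W), u \o f = u \o g ->
    exists h : Hom Q W, h \o q = u /\ forall h' : Hom Q W, h' \o q = u -> h' = h.

Definition regular_epi {B Q : C} (e : Hom B Q) : Prop :=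
  exists (A : C) (f g : Hom A B), is_coequalizer f g e.

Definition is_product {X Y P : C} (p1 : Hom P X) (p2 : Hom P Y) : Prop :=
  forall W (f : Hom W X) (g : Hom W Y),
    exists h : Hom W P, (p1 \o h = f /\ p2 \o h = g) /\
      forall h' : Hom W P, p1 \o h' = f -> p2 \o h' = g -> h' = h.

Definition is_product3 {X Y Z P : C} (q1 : Hom P X) (q2 : Hom P Y)
    (q3 : Hom P Z) : Prop :=
  forall W (f : Hom W X) (g : Hom W Y) (k : Hom W Z),
    exists h : Hom W P, (q1 \o h = f /\ q2 \o h = g /\ q3 \o h = k) /\
      forall h' : Hom W P, q1 \o h' = f -> q2 \o h' = g -> q3 \o h' = k -> h' = h.

(* Regular category: finite limits (terminal object + pullbacks),
   coequalizers of kernel pairs, pullback-stable regular epimorphisms. *)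
Definition regular_category : Prop :=
  (exists T : C, is_terminal T) /\
  (forall (A B Z : C) (f : Hom A Z) (g : Hom B Z),
     exists (P : C) (p1 : Hom P A) (p2 : Hom P B), is_pullback f g p1 p2) /\
  (forall (A B K : C) (f : Hom A B) (k1 k2 : Hom K A),
     is_pullback f f k1 k2 -> exists (Q : C) (q : Hom A Q), is_coequalizer k1 k2 q) /\
  (forall (A B B' P : C) (e : Hom A B) (g : Hom B' B) (p1 : Hom P A) (p2 : Hom P B'),
     regular_epi e -> is_pullback e g p1 p2 -> regular_epi p2).

Definition gen_in {S W M : C} (w : Hom S W) (m : Hom M W) : Prop :=
  exists u : Hom S M, m \o u = w.

Definition subobj_le {W M N : C} (m : Hom M W) (n : Hom N W) : Prop :=
  gen_in m n.

Definition in3 {X Y Z P R0 S : C} (q1 : Hom P X) (q2 : Hom P Y) (q3 : Hom P Z)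
    (r : Hom R0 P) (x : Hom S X) (y : Hom S Y) (z : Hom S Z) : Prop :=
  exists u : Hom S R0, q1 \o (r \o u) = x /\ q2 \o (r \o u) = y /\ q3 \o (r \o u) = z.

Definition majority_selecting {X Y Z P R0 : C} (q1 : Hom P X) (q2 : Hom P Y)
    (q3 : Hom P Z) (r : Hom R0 P) : Prop :=
  forall (S : C) (x x' : Hom S X) (y y' : Hom S Y) (z z' : Hom S Z),
    in3 q1 q2 q3 r x y z' -> in3 q1 q2 q3 r x y' z -> in3 q1 q2 q3 r x' y z ->
    in3 q1 q2 q3 r x y z.

Definition majority_category : Prop :=
  forall (X Y Z P R0 : C) (q1 : Hom P X) (q2 : Hom P Y) (q3 : Hom P Z)
         (r : Hom R0 P),
    is_product3 q1 q2 q3 -> mono r -> majority_selecting q1 q2 q3 r.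

(* Relations on X: monos into a fixed product (P, p1, p2) of X with X. *)
Definition reflexive_rel {X P R0 : C} (p1 p2 : Hom P X) (r : Hom R0 P) : Prop :=
  exists u : Hom X R0, p1 \o (r \o u) = idm X /\ p2 \o (r \o u) = idm X.

(* t represents the composite relation R o S (R = r, S = s): the image
   (regular epi / mono factorization) of (r1 q1, s2 q2) : Pb -> X x X,
   where (Pb, q1, q2) is the pullback of s1 along r2. *)
Definition is_composite {X P R0 S0 T0 : C} (p1 p2 : Hom P X)
    (r : Hom R0 P) (s : Hom S0 P) (t : Hom T0 P) : Prop :=
  mono t /\
  exists (Pb : C) (q1 : Hom Pb R0) (q2 : Hom Pb S0) (e : Hom Pb T0),
    is_pullback (p2 \o r) (p1 \o s) q1 q2 /\ regular_epi e /\
    p1 \o (t \o e) = p1 \o (r \o q1) /\ p2 \o (t \o e) = p2 \o (s \o q2).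

End Notions.

(* Main.v *)
Require Import Defs.

Ltac nr := repeat rewrite <- comp_assoc.
Ltac nrin H := repeat rewrite <- comp_assoc in H.

Lemma postc {C : Category} {A B D : C} (f g : Hom A B) (w : Hom D A) :
  f = g -> f \o w = g \o w.
Proof. intros ->; reflexivity. Qed.

Ltac push H w name := pose proof (postc w H) as name; nrin name.

Lemma epi_of_reg {C : Category} {B Q : C} (e : Hom B Q) :
  regular_epi e -> forall W (g h : Hom Q W), g \o e = h \o e -> g = h.
Proof.
  intros [A [f1 [f2 [Hc Hu]]]] W g h E.
  destruct (Hu W (g \o e)) as [k [_ Hk]].
  { rewrite <- !comp_assoc, Hc; reflexivity. }
  rewrite (Hk g eq_refl), (Hk h (eq_sym E)). reflexivity.
Qed.

Lemma lift_mono {C : Category} {S T M W : C} (e : Hom S T) (m : Hom M W)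
  (g : Hom T W) (v : Hom S M) :
  regular_epi e -> mono m -> m \o v = g \o e -> exists h, m \o h = g.
Proof.
  intros He Hm E. pose proof He as [A [f1 [f2 [Hc Hu]]]].
  destruct (Hu M v) as [h [Hh _]].
  { apply Hm. rewrite !comp_assoc, E, <- !comp_assoc, Hc. reflexivity. }
  exists h. apply (epi_of_reg _ He). rewrite <- comp_assoc, Hh. exact E.
Qed.

Lemma prod_unique {C : Category} {X P : C} (p1 p2 : Hom P X) :
  is_product p1 p2 -> forall W (f g : Hom W P), p1 \o f = p1 \o g -> p2 \o f = p2 \o g -> f = g.
Proof.
  intros H W f g E1 E2. destruct (H W (p1 \o f) (p2 \o f)) as [h [_ U]].
  rewrite (U f eq_refl eq_refl), (U g (eq_sym E1) (eq_sym E2)). reflexivity.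
Qed.

Lemma pb_unique {C : Category} {A B Z P : C} (f : Hom A Z) (g : Hom B Z)
    (p1 : Hom P A) (p2 : Hom P B) :
  is_pullback f g p1 p2 -> forall W (h h' : Hom W P),
  p1 \o h = p1 \o h' -> p2 \o h = p2 \o h' -> h = h'.
Proof.
  intros [Hc U] W h h' E1 E2.
  destruct (U W (p1 \o h) (p2 \o h)) as [k [_ Hk]].
  { rewrite !comp_assoc, Hc. reflexivity. }
  rewrite (Hk h eq_refl eq_refl), (Hk h' (eq_sym E1) (eq_sym E2)). reflexivity.
Qed.

Lemma coeq_reg {C : Category} {A B Q : C} (f g : Hom A B) (q : Hom B Q) :
  is_coequalizer f g q -> regular_epi q.
Proof. intros H; exists A, f, g; exact H. Qed.

Section Reg.
Variable C : Category.
Hypothesis HR : regular_category C.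

Lemma pb_regepi {A B B' : C} (e : Hom A B) (g : Hom B' B) :
  regular_epi e -> exists (P : C) (s : Hom P A) (e' : Hom P B'),
    e \o s = g \o e' /\ regular_epi e'.
Proof.
  destruct HR as [_ [Hpb [_ Hst]]]. intros He.
  destruct (Hpb _ _ _ e g) as [P [p1 [p2 Hp]]].
  exists P, p1, p2. split; [apply Hp | eapply Hst; eauto].
Qed.

Lemma image_fact {Q T : C} (f : Hom Q T) :
  exists (I : C) (q : Hom Q I) (m : Hom I T), regular_epi q /\ mono m /\ m \o q = f.
Proof.
  pose proof HR as [_ [Hpb [Hco _]]].
  destruct (Hpb _ _ _ f f) as [K [k1 [k2 Hk]]].
  destruct (Hco _ _ _ f k1 k2 Hk) as [I [q Hq]].
  pose proof Hq as [Hqc Hqu].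
  destruct (Hqu T f (proj1 Hk)) as [m [Hm _]].
  exists I, q, m. split; [eapply coeq_reg; eauto|]. split; [|exact Hm].
  intros W u v E.
  assert (Hqr : regular_epi q) by (eapply coeq_reg; eauto).
  destruct (pb_regepi q u Hqr) as [P1 [a1 [e1 [E1 R1]]]].
  destruct (pb_regepi q (v \o e1) Hqr) as [P2 [a2 [e2 [E2 R2]]]].
  destruct Hk as [Hkc Hku].
  destruct (Hku P2 (a1 \o e2) a2) as [h [[H1 H2] _]].
  { rewrite <- Hm. nr. rewrite (comp_assoc q a1 e2), E1, E2.
    nr. rewrite !comp_assoc, E. reflexivity. }
  apply (epi_of_reg _ R1). apply (epi_of_reg _ R2).
  rewrite <- E1, <- E2, <- comp_assoc, <- H1, comp_assoc, Hqc, <- comp_assoc, H2.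
  reflexivity.
Qed.

Lemma prod3_exists {X P : C} (p1 p2 : Hom P X) : is_product p1 p2 ->
  exists (T : C) (t1 t2 : Hom T P), is_product3 (p1 \o t1) (p2 \o t1) (p2 \o t2).
Proof.
  intros Hp. pose proof HR as [_ [Hpb _]].
  destruct (Hpb _ _ _ p1 p1) as [T [t1 [t2 Ht]]].
  exists T, t1, t2. intros W f g k.
  destruct (Hp W f g) as [h1 [[A1 A2] _]].
  destruct (Hp W f k) as [h2 [[B1 B2] _]].
  pose proof Ht as [Htc Htu].
  destruct (Htu W h1 h2) as [h [[H1 H2] _]]. { congruence. }
  exists h. split.
  - nr. rewrite H1, H2. auto.
  - intros h' E1 E2 E3. nrin E1. nrin E2. nrin E3.
    apply (pb_unique _ _ _ _ Ht).
    + rewrite H1. apply (prod_unique _ _ Hp); congruence.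
    + rewrite H2. apply (prod_unique _ _ Hp); [|congruence].
      rewrite B1, <- E1. rewrite !comp_assoc, Htc. reflexivity.
Qed.
End Reg.
From Stdlib Require Import Setoid.
Ltac contify H :=
  match type of H with @eq (@Hom ?Cc ?A ?B) ?L ?R =>
    let H' := fresh H "c" in
    assert (H' : forall W (w : @Hom Cc W A), comp L w = comp R w)
      by (intros; rewrite H; reflexivity);
    repeat setoid_rewrite <- comp_assoc in H'
  end.

Theorem lemma3p1 (C : Category) :
  regular_category C -> majority_category C ->
  forall (X P : C) (p1 p2 : Hom P X), is_product p1 p2 ->
  forall (A0 B0 C0 : C) (a : Hom A0 P) (b : Hom B0 P) (c : Hom C0 P),
    mono a -> mono b -> mono c ->
    reflexive_rel p1 p2 a -> reflexive_rel p1 p2 b -> reflexive_rel p1 p2 c ->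
  forall (AB0 AC0 : C) (ab : Hom AB0 P) (ac : Hom AC0 P),
    is_composite p1 p2 a b ab -> is_composite p1 p2 a c ac ->
  forall (I0 : C) (i1 : Hom I0 AB0) (i2 : Hom I0 AC0),
    is_pullback ab ac i1 i2 ->
  forall (J0 : C) (j1 : Hom J0 B0) (j2 : Hom J0 C0),
    is_pullback b c j1 j2 ->
  forall (D0 : C) (d : Hom D0 P),
    is_composite p1 p2 a (b \o j1) d ->
  subobj_le (ab \o i1) d.
Proof.
  intros HR HM X P p1 p2 Hp A0 B0 C0 a b c Ha Hb Hc [ua [Ua1 Ua2]] [ub [Ub1 Ub2]]
    [uc [Uc1 Uc2]] AB0 AC0 ab ac
    [Hmab [PbB [qB1 [qB2 [eB [[HBc _] [HeB [HB1 HB2]]]]]]]]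
    [Hmac [PbC [qC1 [qC2 [eC [[HCc _] [HeC [HC1 HC2]]]]]]]]
    I0 i1 i2 [Hic _] J0 j1 j2 [_ Uj] D0 d
    [Hmd [PbD [qD1 [qD2 [eD [[_ UD] [HeD [HD1 HD2]]]]]]]].
  destruct (pb_regepi _ HR eB i1 HeB) as [S1 [s1 [e1 [Es1 R1]]]].
  destruct (pb_regepi _ HR eC (i2 \o e1) HeC) as [S2 [s2 [e2 [Es2 R2]]]].
  nrin Ua1. nrin Ua2. nrin Ub1. nrin Ub2. nrin Uc1. nrin Uc2.
  nrin HB1. nrin HB2. nrin HBc. nrin HC1. nrin HC2. nrin HCc. nrin Es2.
  nrin HD1. nrin HD2.
  contify Ua1. contify Ua2. contify Ub1. contify Ub2. contify Uc1. contify Uc2.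
  contify HB1. contify HB2. contify HBc. contify HC1. contify HC2. contify HCc.
  contify Es1. contify Es2. contify Hic. contify HD1. contify HD2.
  assert (FB1 : p1 \o (a \o (qB1 \o (s1 \o e2))) = p1 \o (ab \o (i1 \o (e1 \o e2)))).
  { rewrite <- HB1c, Es1c. reflexivity. }
  assert (FB2 : p2 \o (a \o (qB1 \o (s1 \o e2))) = p1 \o (b \o (qB2 \o (s1 \o e2)))).
  { rewrite HBcc. reflexivity. }
  assert (FB3 : p2 \o (b \o (qB2 \o (s1 \o e2))) = p2 \o (ab \o (i1 \o (e1 \o e2)))).
  { rewrite <- HB2c, Es1c. reflexivity. }
  assert (FC1 : p1 \o (a \o (qC1 \o s2)) = p1 \o (ab \o (i1 \o (e1 \o e2)))).
  { rewrite <- HC1c, Es2, <- Hicc. reflexivity. }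
  assert (FC2 : p2 \o (a \o (qC1 \o s2)) = p1 \o (c \o (qC2 \o s2))).
  { rewrite HCcc. reflexivity. }
  assert (FC3 : p2 \o (c \o (qC2 \o s2)) = p2 \o (ab \o (i1 \o (e1 \o e2)))).
  { rewrite <- HC2c, Es2, <- Hicc. reflexivity. }
  pose proof HR as [_ [Hpb _]].
  destruct (prod3_exists _ HR _ _ Hp) as [T3 [t1 [t2 HT]]].
  destruct (Hpb _ _ _ (p2 \o a) (p1 \o b)) as [Q1 [r1 [r2 [HQ1c HQ1u]]]].
  destruct (Hpb _ _ _ (p1 \o (b \o r2)) (p1 \o c)) as [Q [u1 [u2 [HQc HQu]]]].
  destruct (HT Q (p1 \o (a \o (r1 \o u1))) (p2 \o (b \o (r2 \o u1))) (p2 \o (c \o u2)))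
    as [fm [[F1 [F2 F3]] _]].
  destruct (image_fact _ HR fm) as [I [q [m [Rq [Hm Eqm]]]]].
  pose proof (HM _ _ _ _ _ _ _ _ m HT Hm) as HMS.
  nrin F1. nrin F2. nrin F3. nrin HQ1c. nrin HQc.
  contify F1. contify F2. contify F3. contify HQ1c. contify HQc. contify Eqm.
  assert (Mem : forall S (al : Hom S A0) (be : Hom S B0) (ga : Hom S C0) xx yy zz,
    p2 \o (a \o al) = p1 \o (b \o be) -> p1 \o (b \o be) = p1 \o (c \o ga) ->
    p1 \o (a \o al) = xx -> p2 \o (b \o be) = yy -> p2 \o (c \o ga) = zz ->
    in3 (p1 \o t1) (p2 \o t1) (p2 \o t2) m xx yy zz).
  { intros S al be ga xx yy zz E1 E2 E3 E4 E5.
    destruct (HQ1u S al be) as [w1 [[W1 W2] _]]. { nr. exact E1. }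
    destruct (HQu S w1 ga) as [w [[W3 W4] _]]. { nr. rewrite W2. exact E2. }
    exists (q \o w). nr. rewrite Eqmc, F1c, F2c, F3c, W3, W1, W2, W4. auto. }
  assert (M1 := Mem S2 (qB1 \o (s1 \o e2)) (qB2 \o (s1 \o e2))
     (uc \o (p2 \o (a \o (qB1 \o (s1 \o e2))))) _ _ _ FB2 ltac:(rewrite Uc1c, comp_id_l; auto)
     FB1 FB3 ltac:(rewrite Uc2c, comp_id_l; reflexivity)).
  assert (M2 := Mem S2 (qC1 \o s2) (ub \o (p2 \o (a \o (qC1 \o s2)))) (qC2 \o s2) _ _ _
     ltac:(rewrite Ub1c, comp_id_l; reflexivity) ltac:(rewrite Ub1c, comp_id_l; exact FC2)
     FC1 ltac:(rewrite Ub2c, comp_id_l; reflexivity) FC3).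
  assert (M3 := Mem S2 (ua \o (p2 \o (ab \o (i1 \o (e1 \o e2)))))
     (ub \o (p2 \o (ab \o (i1 \o (e1 \o e2))))) (uc \o (p2 \o (ab \o (i1 \o (e1 \o e2))))) _ _ _
     ltac:(rewrite Ua2c, Ub1c; reflexivity) ltac:(rewrite Ub1c, Uc1c; reflexivity)
     ltac:(rewrite Ua1c, comp_id_l; reflexivity) ltac:(rewrite Ub2c, comp_id_l; reflexivity)
     ltac:(rewrite Uc2c, comp_id_l; reflexivity)).
  destruct (HMS _ _ _ _ _ _ _ M1 M2 M3) as [u [U1 [U2 U3]]].
  nrin U1. nrin U2. nrin U3. contify U1. contify U2. contify U3.
  destruct (pb_regepi _ HR q u Rq) as [S3 [w [e3 [Ew R3]]]].
  contify Ew.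
  assert (G1 : p1 \o (a \o (r1 \o (u1 \o w))) = p1 \o (ab \o (i1 \o (e1 \o (e2 \o e3))))).
  { rewrite <- F1c, <- Eqmc, Ew, U1c. nr. reflexivity. }
  assert (G2 : p2 \o (b \o (r2 \o (u1 \o w))) = p2 \o (ab \o (i1 \o (e1 \o (e2 \o e3))))).
  { rewrite <- F2c, <- Eqmc, Ew, U2c. nr. reflexivity. }
  assert (G3 : p2 \o (c \o (u2 \o w)) = p2 \o (ab \o (i1 \o (e1 \o (e2 \o e3))))).
  { rewrite <- F3c, <- Eqmc, Ew, U3c. nr. reflexivity. }
  assert (bc : b \o (r2 \o (u1 \o w)) = c \o (u2 \o w)).
  { apply (prod_unique _ _ Hp). rewrite HQcc. reflexivity. rewrite G2, G3. reflexivity. }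
  destruct (Uj S3 _ _ bc) as [de [[D1 D2] _]].
  destruct (UD S3 (r1 \o (u1 \o w)) de) as [w' [[W1 W2] _]].
  { nr. rewrite D1, HQ1cc. reflexivity. }
  assert (Key : d \o (eD \o w') = ab \o (i1 \o (e1 \o (e2 \o e3)))).
  { apply (prod_unique _ _ Hp).
    - rewrite HD1c, W1, G1. reflexivity.
    - rewrite HD2c, W2, D1, G2. reflexivity. }
  destruct (lift_mono e3 d (ab \o (i1 \o (e1 \o e2))) (eD \o w') R3 Hmd)
    as [h3 H3]. { rewrite Key. nr. reflexivity. }
  destruct (lift_mono e2 d (ab \o (i1 \o e1)) h3 R2 Hmd)
    as [h2 H2]. { rewrite H3. nr. reflexivity. }
  destruct (lift_mono e1 d (ab \o i1) h2 R1 Hmd)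
    as [h1 H1]. { rewrite H2. nr. reflexivity. }
  exists h1. exact H1.
Qed.
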